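(* Let $m\ge 7$ and $n\ge 1$ be integers, and let $f$ be an extendable knight's tour on $\mathcal{M}_{m-4,n}$ based at $(0,0)$. If $f$ is nullhomotopic, then for every integer $k\ge 0$ there exists a nullhomotopic knight's tour on $\mathcal{M}_{m+4k,n}$. If $f$ is generating, then for every integer $k\ge 0$ there exists a generating knight's tour on $\mathcal{M}_{m+4k,n}$.
   Context: For a positive integer $k$, let $\mathcal{S}_k$ be the graph with vertex set $\{(a,b)\in\mathbb{Z}^2: 0\le a<k\}$, where $(a,b),(a',b')$ are adjacent iff $\{|a-a'|,|b-b'|\}=\{1,2\}$. For $n\ge1$, $\sigma_k(a,b)=(k-1-a,\,b+n)$ generates a free $\mathbb{Z}$-action on $\mathcal{S}_k$, and $\mathcal{M}_{k,n}=\mathcal{S}_k/\langle\sigma_k\rangle$ (vertices and edges are orbits; multiple edges/loops allowed) is the knight's multigraph of the $k\times n$ Möbius strip board, with covering map $\phi_M:\mathcal{S}_k\to\mathcal{M}_{k,n}$. A knight's tour is a closed walk visiting every vertex exactly once apart from the repeated start/end vertex (a Hamiltonian cycle). For a tour based at $(0,0)$, take its unique lift to $\mathcal{S}_k$ starting at $(0,0)$; the tour is nullhomotopic if the lift ends at $(0,0)$ and generating if it ends at $(k-1,n)$ or $(k-1,-n)$. Let $\iota:\mathcal{S}_{m-4}\to\mathcal{S}_m$, $\iota(a,b)=(a+2,b)$. A left edge of $\mathcal{S}_m$ joins a vertex with first coordinate $2$ to one with first coordinate $3$; a right edge joins a vertex with first coordinate $m-4$ to one with first coordinate $m-3$; the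 second coordinates of the endpoints differ by $2$, and the edge is even or odd according to their parity. A collection of left and right edges is extending if: for $n$ even, it consists of exactly four edges, two even and two odd; for $n$ odd, it consists of exactly two edges, one left even or right odd and the other left odd or right even. An edge is traversed upward by a walk if the second coordinate increases along the traversal, downward otherwise. A knight's tour $f$ on $\mathcal{M}_{m-4,n}$ based at $(0,0)$ with lift $\tilde f$ to $\mathcal{S}_{m-4}$ starting at $(0,0)$ is extendable if $\iota\circ\tilde f$ traverses every edge of some extending collection of edges of $\mathcal{S}_m$, exactly half of them upward and half downward. *)

(* Defs.v *)
From Stdlib Require Import ZArith List Permutation.
Import ListNotations.
Open Scope Z_scope.

Definition pt := (Z * Z)%type.

Definition knight_adj (p q : pt) : Prop :=
  (Z.abs (fst p - fst q) = 1 /\ Z.abs (snd p - snd q) = 2) \/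
  (Z.abs (fst p - fst q) = 2 /\ Z.abs (snd p - snd q) = 1).

Definition in_strip (k : Z) (p : pt) : Prop := 0 <= fst p < k.

Definition sigma (k n : Z) (p : pt) : pt := (k - 1 - fst p, snd p + n).

(* p and q lie in the same <sigma_k>-orbit, i.e. define the same vertex of M_{k,n} *)
Definition same_orbit (k n : Z) (p q : pt) : Prop :=
  exists j : nat, Nat.iter j (sigma k n) p = q \/ Nat.iter j (sigma k n) q = p.

(* A knight's tour of M_{k,n} based at (0,0), given by its unique lift w to S_k
   starting at (0,0): w 0, ..., w N is a walk in S_k whose projection
   phi_M(w 0), ..., phi_M(w N) is a closed walk in M_{k,n} visiting every
   vertex exactly once (apart from the repeated start/end vertex). *)
Definition tour_lift (k n : Z) (N : nat) (w : nat -> pt) : Prop :=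
  w 0%nat = (0, 0) /\
  (forall i, (i <= N)%nat -> in_strip k (w i)) /\
  (forall i, (i < N)%nat -> knight_adj (w i) (w (S i))) /\
  same_orbit k n (w N) (w 0%nat) /\
  (forall i j, (i < N)%nat -> (j < N)%nat -> same_orbit k n (w i) (w j) -> i = j) /\
  (forall p, in_strip k p -> exists i, (i < N)%nat /\ same_orbit k n p (w i)).

Definition nullhomotopic (N : nat) (w : nat -> pt) : Prop := w N = (0, 0).

Definition generating (k n : Z) (N : nat) (w : nat -> pt) : Prop :=
  w N = (k - 1, n) \/ w N = (k - 1, - n).

Definition iota (p : pt) : pt := (fst p + 2, snd p).

(* An edge of S_m between adjacent columns, recorded as (p,q) with
   fst q = fst p + 1 (p is the endpoint in the lower column). *)
Definition edge := (pt * pt)%type.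

Definition left_edge (m : Z) (e : edge) : Prop :=
  fst (fst e) = 2 /\ fst (snd e) = 3 /\ Z.abs (snd (fst e) - snd (snd e)) = 2.

Definition right_edge (m : Z) (e : edge) : Prop :=
  fst (fst e) = m - 4 /\ fst (snd e) = m - 3 /\ Z.abs (snd (fst e) - snd (snd e)) = 2.

Definition even_edge (e : edge) : Prop := Z.Even (snd (fst e)).
Definition odd_edge (e : edge) : Prop := Z.Odd (snd (fst e)).

Definition extending (m n : Z) (E : list edge) : Prop :=
  NoDup E /\
  (forall e, In e E -> left_edge m e \/ right_edge m e) /\
  ((Z.Even n /\
      exists e1 e2 e3 e4, Permutation E [e1; e2; e3; e4] /\
        even_edge e1 /\ even_edge e2 /\ odd_edge e3 /\ odd_edge e4) \/
   (Z.Odd n /\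
      exists e1 e2, Permutation E [e1; e2] /\
        ((left_edge m e1 /\ even_edge e1) \/ (right_edge m e1 /\ odd_edge e1)) /\
        ((left_edge m e2 /\ odd_edge e2) \/ (right_edge m e2 /\ even_edge e2)))).

Definition traverses_up (W : nat -> pt) (N : nat) (e : edge) : Prop :=
  exists i, (i < N)%nat /\
    ((W i = fst e /\ W (S i) = snd e) \/ (W i = snd e /\ W (S i) = fst e)) /\
    snd (W i) < snd (W (S i)).

Definition traverses_down (W : nat -> pt) (N : nat) (e : edge) : Prop :=
  exists i, (i < N)%nat /\
    ((W i = fst e /\ W (S i) = snd e) \/ (W i = snd e /\ W (S i) = fst e)) /\
    snd (W (S i)) < snd (W i).

Definition extendable (m n : Z) (N : nat) (w : nat -> pt) : Prop :=
  tour_lift (m - 4) n N w /\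
  exists E : list edge, extending m n E /\
    exists U D : list edge, Permutation E (U ++ D) /\ length U = length D /\
      (forall e, In e U -> traverses_up (fun i => iota (w i)) N e) /\
      (forall e, In e D -> traverses_down (fun i => iota (w i)) N e).

(* Main.v *)
Require Import Defs.
From Stdlib Require Import ZArith List Permutation Lia Bool.
Import ListNotations.
Open Scope Z_scope.


Definition sigz (K n t : Z) (p : pt) : pt :=
  (if Z.even t then fst p else K - 1 - fst p, snd p + t * n).
Definition key (K n : Z) (p : pt) : pt :=
  (if Z.even (snd p / n) then fst p else K - 1 - fst p, snd p mod n).

Lemma sigz_comp K n a b p : sigz K n a (sigz K n b p) = sigz K n (b + a) p.
Proof.
  destruct p as [x y]; unfold sigz; simpl. rewrite Z.even_add.
  f_equal; [|lia]. destruct (Z.even a), (Z.even b); simpl; lia.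
Qed.

Lemma sigz0 K n p : sigz K n 0 p = p.
Proof. destruct p; unfold sigz; simpl; f_equal; lia. Qed.

Lemma iter_sigma K n j p : Nat.iter j (sigma K n) p = sigz K n (Z.of_nat j) p.
Proof.
  induction j; simpl.
  - now rewrite sigz0.
  - rewrite IHj. replace (sigma K n (sigz K n (Z.of_nat j) p)) with (sigz K n 1 (sigz K n (Z.of_nat j) p)).
    + rewrite sigz_comp. f_equal. lia.
    + unfold sigma, sigz; rewrite Z.mul_1_l; reflexivity.
Qed.

Lemma key_sigz K n t p : n <> 0 -> key K n (sigz K n t p) = key K n p.
Proof.
  intros Hn. destruct p as [x y]; unfold key, sigz; simpl.
  rewrite Z.div_add by lia. rewrite Z.mod_add by lia.
  rewrite Z.even_add. f_equal.
  destruct (Z.even t), (Z.even (y / n)); simpl; lia.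
Qed.

Lemma key_eq_sigz K n p q : 0 < n -> key K n p = key K n q ->
  q = sigz K n (snd q / n - snd p / n) p.
Proof.
  intros Hn. destruct p as [x y], q as [x' y']; unfold key, sigz; simpl.
  intros H; injection H; clear H; intros Hm Hc.
  pose proof (Z.div_mod y n ltac:(lia)). pose proof (Z.div_mod y' n ltac:(lia)).
  f_equal; [| nia].
  rewrite Z.even_sub.
  destruct (Z.even (y / n)), (Z.even (y' / n)); simpl in *; lia.
Qed.

Lemma same_orbit_key K n p q : 0 < n -> (same_orbit K n p q <-> key K n p = key K n q).
Proof.
  intros Hn; split.
  - intros [j [H|H]]; rewrite iter_sigma in H; subst.
    + now rewrite key_sigz by lia.
    + now rewrite key_sigz by lia.
  - intros H. pose proof (key_eq_sigz K n p q Hn H) as E.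
    set (j := snd q / n - snd p / n) in E.
    destruct (Z_le_gt_dec 0 j).
    + exists (Z.to_nat j). left. rewrite iter_sigma, Z2Nat.id by lia. now symmetry.
    + exists (Z.to_nat (- j)). right. rewrite iter_sigma, Z2Nat.id by lia.
      rewrite E, sigz_comp. replace (j + - j) with 0 by lia. apply sigz0.
Qed.


Fixpoint chain (l : list pt) : Prop :=
  match l with
  | x :: ((y :: _) as l') => knight_adj x y /\ chain l'
  | _ => True
  end.

Lemma chain_app l1 x l2 : chain (l1 ++ x :: l2) <-> chain (l1 ++ [x]) /\ chain (x :: l2).
Proof.
  induction l1 as [|a l1 IH]; simpl.
  - tauto.
  - destruct l1 as [|b l1]; simpl in *.
    + tauto.
    + rewrite IH. tauto.
Qed.

Lemma chain_map f l : (forall p q, knight_adj p q -> knight_adj (f p) (f q)) ->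
  chain l -> chain (map f l).
Proof.
  intros Hf. induction l as [|a l IH]; simpl; auto.
  destruct l as [|b l]; simpl in *; auto. intros [H1 H2]; split; [apply Hf; exact H1| exact (IH H2)].
Qed.

Lemma chain_nth l d i : chain l -> (S i < length l)%nat -> knight_adj (nth i l d) (nth (S i) l d).
Proof.
  revert i. induction l as [|a l IH]; intros i Hc Hi; simpl in *; [lia|].
  destruct l as [|b l]; simpl in *; [lia|]. destruct Hc as [H1 H2].
  destruct i; [exact H1|]. apply (IH i H2). simpl. lia.
Qed.

Lemma chain_seq (f : nat -> pt) a len :
  (forall i, (a <= i)%nat -> (S i < a + len)%nat -> knight_adj (f i) (f (S i))) ->
  chain (map f (seq a len)).
Proof.
  revert a. induction len as [|len IH]; intros a H; simpl; auto.
  destruct len as [|len]; simpl; auto. split.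
  - apply H; lia.
  - change (chain (map f (seq (S a) (S len)))). apply IH. intros i H1 H2. apply H; lia.
Qed.

Lemma adj_sigz K n t p q : knight_adj p q -> knight_adj (sigz K n t p) (sigz K n t q).
Proof.
  unfold knight_adj, sigz; destruct p as [a b], q as [c d]; simpl.
  destruct (Z.even t); simpl;
  replace (b + t * n - (d + t * n)) with (b - d) by lia;
  try replace (K - 1 - a - (K - 1 - c)) with (- (a - c)) by lia;
  rewrite ?Z.abs_opp; tauto.
Qed.

Lemma strip_sigz K n t p : in_strip K p -> in_strip K (sigz K n t p).
Proof. unfold in_strip, sigz; destruct p; simpl; destruct (Z.even t); simpl; lia. Qed.

Definition Gtour (K n t : Z) (L : list pt) : Prop :=
  L <> [] /\ chain L /\ (forall p, In p L -> in_strip K p) /\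
  NoDup (map (key K n) (removelast L)) /\
  last L (0,0) = sigz K n t (hd (0,0) L) /\
  length (removelast L) = Z.to_nat (K * n).

Definition zr (k : Z) : list Z := map Z.of_nat (seq 0 (Z.to_nat k)).
Lemma zr_in k x : In x (zr k) <-> 0 <= x < k.
Proof.
  unfold zr. rewrite in_map_iff. split.
  - intros [i [<- Hi]]. apply in_seq in Hi. lia.
  - intros H. exists (Z.to_nat x). rewrite in_seq. split; lia.
Qed.
Lemma zr_nodup k : NoDup (zr k).
Proof.
  unfold zr. apply NoDup_map_NoDup_ForallPairs; [|apply seq_NoDup].
  intros x y _ _ H. lia.
Qed.
Lemma zr_len k : length (zr k) = Z.to_nat k.
Proof. unfold zr. now rewrite length_map, length_seq. Qed.

Lemma nodup_prod {A B} (l : list A) (l' : list B) : NoDup l -> NoDup l' -> NoDup (list_prod l l').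
Proof.
  intros H1 H2. induction H1 as [|a l Ha Hl IH]; simpl; [constructor|].
  apply NoDup_app; auto.
  - apply NoDup_map_NoDup_ForallPairs; auto. intros x y _ _ H; congruence.
  - intros [x y] Hx Hy. apply in_map_iff in Hx. destruct Hx as [z [Hz _]]. injection Hz; intros; subst; auto.
    apply in_prod_iff in Hy. tauto.
Qed.

Definition R (K n : Z) := list_prod (zr K) (zr n).
Lemma R_in K n p : In p (R K n) <-> 0 <= fst p < K /\ 0 <= snd p < n.
Proof. destruct p; unfold R; rewrite in_prod_iff, !zr_in; simpl; tauto. Qed.
Lemma R_nodup K n : NoDup (R K n).
Proof. apply nodup_prod; apply zr_nodup. Qed.
Lemma R_len K n : 0 <= K -> 0 <= n -> length (R K n) = Z.to_nat (K * n).
Proof. intros. unfold R. rewrite length_prod, !zr_len. lia. Qed.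

Lemma key_range K n p : 0 < n -> in_strip K p -> In (key K n p) (R K n).
Proof.
  intros Hn Hp. apply R_in. unfold key, in_strip in *. destruct p as [a b]; simpl in *.
  split; [destruct (Z.even (b / n)); lia|]. apply Z.mod_pos_bound; lia.
Qed.

Lemma nodup_map_inj {A B} (f : A -> B) (l : list A) :
  NoDup l -> (forall x y, In x l -> In y l -> f x = f y -> x = y) -> NoDup (map f l).
Proof.
  intros H1 H2. apply NoDup_map_NoDup_ForallPairs; auto.
Qed.

Lemma cover_keys K n c : 0 < n -> 0 <= K ->
  NoDup (map (key K n) c) -> length c = Z.to_nat (K * n) -> (forall p, In p c -> in_strip K p) ->
  incl (R K n) (map (key K n) c).
Proof.
  intros Hn HK H1 H2 H3. apply NoDup_length_incl; auto.
  - rewrite length_map, R_len; lia.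
  - intros x Hx. apply in_map_iff in Hx. destruct Hx as [p [<- Hp]]. apply key_range; auto.
Qed.


Lemma removelast_map_seq (w : nat -> pt) N : removelast (map w (seq 0 (S N))) = map w (seq 0 N).
Proof. rewrite seq_S, map_app. simpl. apply removelast_last. Qed.

Lemma key_R K n r : 0 < n -> In r (R K n) -> key K n r = r.
Proof.
  intros Hn H. apply R_in in H. destruct r as [a b]; unfold key; simpl in *.
  rewrite Z.div_small by lia. rewrite Z.mod_small by lia. reflexivity.
Qed.

Lemma tour_to_gtour K n N w t : 0 < n -> 0 < K -> tour_lift K n N w ->
  w N = sigz K n t (0,0) -> Gtour K n t (map w (seq 0 (S N))).
Proof.
  intros Hn HK [H0 [Hs [Ha [Ho [Hi Hc]]]]] HN.
  assert (Hkeys : NoDup (map (key K n) (map w (seq 0 N)))).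
  { rewrite map_map. apply nodup_map_inj; [apply seq_NoDup|].
    intros x y Hx Hy E. apply in_seq in Hx, Hy. apply Hi; try lia.
    apply same_orbit_key; auto. }
  split; [|split; [|split; [|split; [|split]]]].
  - simpl; discriminate.
  - apply chain_seq. intros i _ Hi'. apply Ha. lia.
  - intros p0 Hp. apply in_map_iff in Hp. destruct Hp as [i [<- Hi']]. apply in_seq in Hi'. apply Hs. lia.
  - rewrite removelast_map_seq. exact Hkeys.
  - rewrite seq_S, map_app. simpl map. rewrite last_last. replace (hd (0,0) (map w (seq 0 N) ++ [w N])) with (w 0%nat) by (destruct N; reflexivity). rewrite H0; exact HN.
  - rewrite removelast_map_seq, length_map, length_seq.
    apply Nat.le_antisymm.
    + assert (E : N = length (map (key K n) (map w (seq 0 N)))) by (rewrite !length_map, length_seq; auto).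
      rewrite E at 1. rewrite <- R_len by lia.
      apply NoDup_incl_length; auto. intros x Hx. apply in_map_iff in Hx. destruct Hx as [p [<- Hp]].
      apply key_range; auto. apply in_map_iff in Hp. destruct Hp as [i [<- Hi']]. apply in_seq in Hi'. apply Hs. lia.
    + assert (E : N = length (map (key K n) (map w (seq 0 N)))) by (rewrite !length_map, length_seq; auto).
      rewrite E. rewrite <- R_len by lia.
      apply NoDup_incl_length; [apply R_nodup|]. intros r Hr.
      assert (Hrs : in_strip K r) by (apply R_in in Hr; unfold in_strip; lia).
      destruct (Hc r Hrs) as [i [Hi1 Hi2]]. apply same_orbit_key in Hi2; auto.
      rewrite key_R in Hi2 by auto. rewrite Hi2. apply in_map. apply in_map. apply in_seq. lia.
Qed.

Lemma nth_key K n c i d : (i < length c)%nat -> nth i (map (key K n) c) (key K n d) = key K n (nth i c d).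
Proof. intros; apply map_nth. Qed.

Lemma nth0_hd {A} (l : list A) d : nth 0 l d = hd d l.
Proof. destruct l; reflexivity. Qed.

Lemma gtour_to_tour K n t L : 0 < n -> 0 < K -> Gtour K n t L -> hd (0,0) L = (0,0) ->
  tour_lift K n (length (removelast L)) (fun i => nth i L (0,0)) /\
  nth (length (removelast L)) L (0,0) = sigz K n t (0,0).
Proof.
  intros Hn HK [Hne [Hch [Hs [Hk [Hl Hlen]]]]] Hhd.
  destruct (exists_last Hne) as [c [z EL]]. subst L.
  rewrite removelast_last in *. rewrite last_last, Hhd in Hl.
  assert (H0 : nth 0 (c ++ [z]) (0,0) = (0,0)) by (destruct c; simpl in *; auto).
  assert (HN : nth (length c) (c ++ [z]) (0,0) = z).
  { rewrite nth_middle. reflexivity. }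
  assert (Hlt : forall i, (i < length c)%nat -> nth i (c ++ [z]) (0,0) = nth i c (0,0)).
  { intros i Hi. apply app_nth1. auto. }
  assert (HLlen : length (c ++ [z]) = S (length c)).
  { rewrite length_app. simpl. lia. }
  assert (Hcs : forall p, In p c -> in_strip K p).
  { intros p Hp. apply Hs. apply in_or_app. auto. }
  split.
  - split; [|split; [|split; [|split; [|split]]]].
    + exact H0.
    + intros i Hi. apply Hs. apply nth_In. lia.
    + intros i Hi. apply chain_nth; auto. lia.
    + apply same_orbit_key; auto. rewrite HN, H0, Hl.
      rewrite key_sigz by lia. reflexivity.
    + intros i j Hi Hj Ho. apply same_orbit_key in Ho; auto.
      rewrite !Hlt in Ho by auto.
      apply (proj1 (NoDup_nth _ (key K n (0,0))) Hk); rewrite ?length_map; auto.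
      rewrite !nth_key by auto. exact Ho.
    + intros p Hp. pose proof (cover_keys K n c Hn ltac:(lia) Hk Hlen Hcs (key K n p) (key_range K n p Hn Hp)) as Hin.
      apply in_map_iff in Hin. destruct Hin as [x [Hx1 Hx2]].
      destruct (In_nth _ _ (0,0) Hx2) as [i [Hi1 Hi2]].
      exists i. split; auto. apply same_orbit_key; auto. rewrite Hlt by auto. transitivity (key K n x); [auto| f_equal; symmetry; exact Hi2].
  - rewrite HN. exact Hl.
Qed.

Lemma gtour_rebase K n t L : 0 < n -> 0 < K -> Gtour K n t L ->
  exists L', Gtour K n t L' /\ hd (0,0) L' = (0,0).
Proof.
  intros Hn HK G. pose proof G as [Hne [Hch [Hs [Hk [Hl Hlen]]]]].
  destruct (exists_last Hne) as [c [z EL]]. subst L.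
  rewrite removelast_last in *. rewrite last_last in Hl.
  assert (Hcs : forall p, In p c -> in_strip K p).
  { intros p Hp. apply Hs. apply in_or_app. auto. }
  assert (H00 : In (0,0) (map (key K n) c)).
  { apply (cover_keys K n c Hn ltac:(lia) Hk Hlen Hcs). apply R_in. simpl. lia. }
  apply in_map_iff in H00. destruct H00 as [x [Hx Hxc]].
  apply in_split in Hxc. destruct Hxc as [A [B Ec]]. subst c.
  assert (Hj : (0,0) = sigz K n (0 / n - snd x / n) x).
  { apply (key_eq_sigz K n x (0,0) Hn). rewrite Hx. symmetry. apply key_R; auto. apply R_in; simpl; lia. }
  set (j := 0 / n - snd x / n) in Hj.
  assert (Hz : z = sigz K n t (hd (0,0) (A ++ x :: B))).
  { rewrite Hl. f_equal. destruct A; reflexivity. }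
  clear Hl.
  exists (map (sigz K n j) ((x :: B) ++ map (sigz K n t) A ++ [sigz K n t x])).
  split; [|simpl; auto].
  assert (Hrl : removelast (map (sigz K n j) ((x :: B) ++ map (sigz K n t) A ++ [sigz K n t x]))
     = map (sigz K n j) ((x :: B) ++ map (sigz K n t) A)).
  { rewrite app_assoc, map_app. apply removelast_last. }
  split; [|split; [|split; [|split; [|split]]]].
  - simpl; discriminate.
  - apply chain_map; [apply adj_sigz|].
    rewrite <- app_assoc in Hch. simpl in Hch. apply chain_app in Hch. destruct Hch as [H1 H2].
    destruct A as [|a A].
    + simpl in *. rewrite Hz in H2. exact H2.
    + simpl in Hz. rewrite Hz in H2. simpl map.
      change (chain ((x :: B) ++ sigz K n t a :: (map (sigz K n t) A ++ [sigz K n t x]))).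
      apply chain_app. split; [exact H2|].
      assert (E : sigz K n t a :: map (sigz K n t) A ++ [sigz K n t x] = map (sigz K n t) ((a :: A) ++ [x])) by (simpl; rewrite map_app; reflexivity). rewrite E. apply chain_map; [apply adj_sigz|exact H1].
  - intros p Hp. apply in_map_iff in Hp. destruct Hp as [y [<- Hy]]. apply strip_sigz.
    apply in_app_or in Hy. destruct Hy as [Hy|Hy].
    + apply Hcs. apply in_or_app. right. exact Hy.
    + apply in_app_or in Hy. destruct Hy as [Hy|Hy].
      * apply in_map_iff in Hy. destruct Hy as [y' [<- Hy']]. apply strip_sigz. apply Hcs. apply in_or_app. auto.
      * destruct Hy as [<-|[]]. apply strip_sigz. apply Hcs. apply in_or_app. simpl; auto.
  - rewrite Hrl. rewrite map_map.
    rewrite (map_ext _ (key K n)) by (intros; apply key_sigz; lia).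
    rewrite map_app, map_map. rewrite (map_ext (fun x0 => key K n (sigz K n t x0)) (key K n)) by (intros; apply key_sigz; lia).
    eapply Permutation_NoDup; [|exact Hk]. rewrite map_app. apply Permutation_app_comm.
  - rewrite app_assoc, map_app. cbn [map]. rewrite last_last. cbn [app hd]. rewrite !sigz_comp. cbn [map app hd]. rewrite sigz_comp. f_equal. lia.
  - rewrite Hrl, length_map, length_app, length_map. rewrite <- Hlen. rewrite length_app. simpl. lia.
Qed.


Ltac zl := Z.div_mod_to_equations; lia.

Ltac bsplit := repeat match goal with
  | |- context [if ?b then _ else _] => let E := fresh "E" in destruct b eqn:E
  end;
  repeat match goal with
  | H : (_ =? _) = true |- _ => apply Z.eqb_eq in H
  | H : (_ =? _) = false |- _ => apply Z.eqb_neq in H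
  | H : (_ <=? _) = true |- _ => apply Z.leb_le in H
  | H : (_ <=? _) = false |- _ => apply Z.leb_gt in H
  end.

Definition rho (n : Z) := if Z.even n then 1 else 2.
Definition qq (n : Z) := if Z.even n then 4 else 2.
Definition mir (rt : bool) (M : Z) (p : pt) : pt := (if rt then M - 1 - fst p else fst p, snd p).
Definition shift (d : Z) (p : pt) : pt := (fst p, snd p + d).

Record task := mkT { tx : pt; ty : pt; ts : Z; tsig : Z; trt : bool }.

Definition c0 M a := fst (mir (trt a) M (tx a)) - 2.
Definition vval M n a := snd (tx a) + 1 - 2 * c0 M a - (if trt a then n else 0).
Definition task_ok M n a := (ts a = 1 \/ ts a = -1) /\ snd (ty a) = snd (tx a) + 2 * ts a /\
  0 <= c0 M a <= 1 /\ fst (mir (trt a) M (ty a)) = 3 - c0 M a /\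
  0 <= tsig a < qq n /\ (tsig a - vval M n a) mod 2 = 0.
Definition uval M n a := if (vval M n a) mod (qq n) =? tsig a then 1 else -1.
Definition Dpt M n a (i : nat) : pt :=
  mir (trt a) M ((c0 M a + Z.of_nat i) mod 2, snd (tx a) + uval M n a - 2 * ts a * Z.of_nat i).
Definition Dlist M n a := map (Dpt M n a) (seq 0 (Z.to_nat (rho n * n))).
Definition dsh n a := -2 * ts a * rho n * n.
Definition band M (p : pt) := 0 <= fst p <= 1 \/ M - 2 <= fst p <= M - 1.
Definition old M (p : pt) := 2 <= fst p <= M - 3.
Definition sid M n (p : pt) := (if fst p <=? 1 then (snd p - 2 * fst p) else (snd p - n - 2 * (M - 1 - fst p))) mod qq n.

Lemma rhon_even n : 1 <= n -> exists h, rho n * n = 2 * h /\ 1 <= h.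
Proof.
  intros Hn. unfold rho. destruct (Z.even n) eqn:E.
  - apply Z.even_spec in E. destruct E as [h ->]. exists h. lia.
  - exists n. lia.
Qed.

Lemma qq_cases n : (Z.even n = true /\ qq n = 4 /\ rho n = 1 /\ exists h, n = 2 * h) \/
                   (Z.even n = false /\ qq n = 2 /\ rho n = 2 /\ exists h, n = 2 * h + 1).
Proof.
  unfold qq, rho. destruct (Z.even n) eqn:E.
  - left. apply Z.even_spec in E. destruct E as [h ->]. repeat split; eauto.
  - right. assert (Z.odd n = true) by (rewrite <- Z.negb_even, E; reflexivity).
    apply Z.odd_spec in H. destruct H as [h ->]. repeat split; eauto.
Qed.

Lemma modq_2n x z n : (x + z * (2 * n)) mod qq n = x mod qq n.
Proof.
  destruct (qq_cases n) as [[_ [-> [_ [h ->]]]]|[_ [-> [_ [h ->]]]]].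
  - replace (x + z * (2 * (2 * h))) with (x + (z * h) * 4) by ring. apply Z.mod_add; lia.
  - replace (x + z * (2 * (2 * h + 1))) with (x + (z * (2 * h + 1)) * 2) by ring. apply Z.mod_add; lia.
Qed.

Lemma sid_D M n a i : 7 <= M -> 1 <= n -> task_ok M n a -> sid M n (Dpt M n a i) = tsig a.
Proof.
  intros HM Hn [Hs [Hy [Hc [Hcy [Hsg Hv]]]]].
  unfold sid, Dpt, uval. unfold vval in *. set (c := c0 M a) in *. set (t := Z.of_nat i).
  destruct a as [[x1 x2] [y1 y2] s sg rt]; cbn [tx ty ts tsig trt fst snd] in *.
  destruct (qq_cases n) as [[_ [Hq [_ [h Hh]]]]|[_ [Hq [_ [h Hh]]]]]; rewrite Hq in *;
  destruct Hs as [-> | ->];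
  destruct rt; cbn [mir fst snd] in *; bsplit; zl.
Qed.

Definition itask (o : task) := mkT (iota (tx o)) (iota (ty o)) (ts o) (tsig o) (trt o).
Definition tshift (d : Z) (a : task) := mkT (shift d (tx a)) (shift d (ty a)) (ts a) (tsig a) (trt a).

Ltac unf := unfold knight_adj, Dpt, mir, shift, iota, uval, vval, c0, sigz in *.

Lemma adj_shift d p q : knight_adj p q -> knight_adj (shift d p) (shift d q).
Proof. unfold knight_adj, shift; destruct p, q; simpl. intros H. replace (z0 + d - (z2 + d)) with (z0 - z2) by lia. exact H. Qed.

Lemma adj_iota p q : knight_adj p q -> knight_adj (iota p) (iota q).
Proof. unfold knight_adj, iota; destruct p, q; simpl. intros H. replace (z + 2 - (z1 + 2)) with (z - z1) by lia. exact H. Qed.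

Section D.
Variables (M n : Z) (a : task).
Hypotheses (HM : 7 <= M) (Hn : 1 <= n) (Ha : task_ok M n a).

Lemma D_adj i : knight_adj (Dpt M n a i) (Dpt M n a (S i)).
Proof.
  destruct Ha as [Hs [Hy [Hc [Hcy [Hsg Hv]]]]]. unfold knight_adj, Dpt, mir.
  set (c := c0 M a) in *. set (u := uval M n a). rewrite Nat2Z.inj_succ.
  destruct Hs as [Hs|Hs]; rewrite Hs; destruct (trt a); cbn [fst snd]; left; zl.
Qed.

Lemma D_chain : chain (Dlist M n a).
Proof. unfold Dlist. apply chain_seq. intros; apply D_adj. Qed.

Lemma D_first : knight_adj (tx a) (Dpt M n a 0).
Proof.
  destruct Ha as [Hs [Hy [Hc [Hcy [Hsg Hv]]]]]. unfold knight_adj, Dpt, mir in *. unfold c0, mir in *.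
  set (u := uval M n a). assert (Hu : u = 1 \/ u = -1) by (unfold u, uval; bsplit; auto).
  destruct (tx a) as [x1 x2]. destruct (trt a); cbn [fst snd] in *; right; zl.
Qed.

Lemma D_last : knight_adj (Dpt M n a (Nat.pred (Z.to_nat (rho n * n)))) (shift (dsh n a) (ty a)).
Proof.
  destruct (rhon_even n Hn) as [h [Hh Hh1]].
  destruct Ha as [Hs [Hy [Hc [Hcy [Hsg Hv]]]]]. unfold knight_adj, Dpt, mir, shift, dsh in *. unfold c0, mir in *.
  set (u := uval M n a). assert (Hu : u = 1 \/ u = -1) by (unfold u, uval; bsplit; auto).
  rewrite Hh. replace (Z.of_nat (Nat.pred (Z.to_nat (2 * h)))) with (2 * h - 1) by lia.
  replace (-2 * ts a * rho n * n) with (-2 * ts a * (2 * h)) by (rewrite <- Hh; ring).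
  destruct (tx a) as [x1 x2]. destruct (ty a) as [y1 y2].
  destruct Hs as [Hs|Hs]; rewrite Hs in *; destruct (trt a); cbn [fst snd] in *; right; zl.
Qed.

Lemma D_band i : band M (Dpt M n a i) /\ in_strip M (Dpt M n a i).
Proof.
  unfold band, in_strip, Dpt, mir. destruct (trt a); cbn [fst snd]; zl.
Qed.

Lemma D_len : length (Dlist M n a) = Z.to_nat (rho n * n).
Proof. unfold Dlist. now rewrite length_map, length_seq. Qed.

End D.

Lemma parity_cases k : (Z.even k = true /\ exists k', k = 2 * k') \/ (Z.even k = false /\ exists k', k = 2 * k' + 1).
Proof.
  destruct (Z.even k) eqn:E.
  - left. split; auto. apply Z.even_spec in E. exact E.
  - right. split; auto. assert (Z.odd k = true) by (rewrite <- Z.negb_even, E; reflexivity).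
    apply Z.odd_spec in H. exact H.
Qed.

Lemma sid_sigz M n k p : 7 <= M -> band M p -> sid M n (sigz M n k p) = sid M n p.
Proof.
  intros HM Hb. destruct p as [x y]. unfold band in Hb. cbn [fst snd] in Hb.
  destruct (parity_cases k) as [[Ek [k' ->]]|[Ek [k' ->]]]; unfold sid, sigz; rewrite Ek; cbn [fst snd]; bsplit;
  match goal with |- ?A mod _ = ?B mod _ =>
    first [ transitivity ((B + k' * (2 * n)) mod qq n); [f_equal; lia | apply modq_2n]
          | transitivity ((B + (k' + 1) * (2 * n)) mod qq n); [f_equal; lia | apply modq_2n]
          | lia ] end.
Qed.

Lemma key_band_sid M n p p' : 7 <= M -> 1 <= n -> band M p -> key M n p = key M n p' -> sid M n p' = sid M n p.
Proof.
  intros HM Hn Hb E. rewrite (key_eq_sigz M n p p' ltac:(lia) E). apply sid_sigz; auto.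
Qed.

Lemma key_old_band M n p p' : old M p -> band M p' -> key M n p <> key M n p'.
Proof.
  intros Ho Hb E. unfold key, old, band in *. injection E; intros _ E1. revert E1. bsplit; lia.
Qed.

Lemma D_nodup M n a : 7 <= M -> 1 <= n -> task_ok M n a -> NoDup (map (key M n) (Dlist M n a)).
Proof.
  intros HM Hn Ha. unfold Dlist. rewrite map_map. apply nodup_map_inj; [apply seq_NoDup|].
  intros i j Hi Hj E. apply in_seq in Hi, Hj.
  pose proof (key_eq_sigz M n _ _ ltac:(lia) E) as E2.
  set (k := snd (Dpt M n a j) / n - snd (Dpt M n a i) / n) in E2. clearbody k.
  destruct (rhon_even n Hn) as [h [Hh Hh1]].
  destruct Ha as [Hs [Hy [Hc [Hcy [Hsg Hv]]]]].
  unfold Dpt, mir, sigz in E2. set (c := c0 M a) in *. set (u := uval M n a) in *.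
  rewrite Hh in Hi, Hj.
  destruct (parity_cases k) as [[Ek [k' ->]]|[Ek [k' ->]]]; rewrite Ek in E2;
  destruct (trt a); cbn [fst snd] in E2; pose proof (f_equal fst E2) as E4; pose proof (f_equal snd E2) as E3; cbn [fst snd] in E3, E4.
  - assert (Hti : Z.of_nat i < rho n * n) by lia. assert (Htj : Z.of_nat j < rho n * n) by lia.
    destruct (qq_cases n) as [[_ [_ [Hr [h' Hh']]]]|[_ [_ [Hr [h' Hh']]]]]; rewrite Hr in *;
    destruct Hs as [Hs|Hs]; rewrite Hs in *.
    all: assert (k' = 0 \/ k' = 1 \/ k' = -1) by nia.
    all: destruct H as [->|[->| ->]]; zl.
  - assert (Hti : Z.of_nat i < rho n * n) by lia. assert (Htj : Z.of_nat j < rho n * n) by lia.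
    destruct (qq_cases n) as [[_ [_ [Hr [h' Hh']]]]|[_ [_ [Hr [h' Hh']]]]]; rewrite Hr in *;
    destruct Hs as [Hs|Hs]; rewrite Hs in *.
    all: assert (k' = 0 \/ k' = 1 \/ k' = -1) by nia.
    all: destruct H as [->|[->| ->]]; zl.
  - zl.
  - zl.
Qed.

Lemma newtask_ok M n a : 7 <= M -> 1 <= n -> task_ok M n a ->
  task_ok (M + 4) n (itask (mkT (Dpt M n a 0) (Dpt M n a 1) (- ts a) ((tsig a + 1) mod qq n) (trt a))).
Proof.
  intros HM Hn Ha. pose proof (sid_D M n a 0 HM Hn Ha) as Hsd.
  destruct Ha as [Hs [Hy [Hc [Hcy [Hsg Hv]]]]].
  unfold sid, Dpt in Hsd.
  unfold task_ok, itask, Dpt, iota. cbn [tx ty ts tsig trt].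
  unfold c0, vval in *. cbn [tx ty ts tsig trt] in *.
  set (c := fst (mir (trt a) M (tx a)) - 2) in *. set (u := uval M n a) in *.
  assert (Hu : u = 1 \/ u = -1) by (unfold u, uval; bsplit; auto).
  destruct (qq_cases n) as [[_ [Hq _]]|[_ [Hq _]]]; rewrite Hq in *;
  destruct (trt a); unfold mir in *; cbn [fst snd] in *; bsplit;
  (split; [lia|]); (split; [lia|]); (split; [zl|]); (split; [zl|]); (split; [zl|]); zl.
Qed.

Lemma key_shift M n z p : n <> 0 -> key M n (shift (z * (2 * n)) p) = key M n p.
Proof.
  intros Hn. replace (shift (z * (2 * n)) p) with (sigz M n (2 * z) p).
  - apply key_sigz; auto.
  - unfold sigz, shift. rewrite Z.even_mul. change (Z.even 2) with true. cbn [orb]. f_equal. lia.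
Qed.

Lemma sid_shift M n z p : sid M n (shift (z * (2 * n)) p) = sid M n p.
Proof.
  unfold sid, shift; cbn [fst snd]. destruct (fst p <=? 1).
  - replace (snd p + z * (2 * n) - 2 * fst p) with ((snd p - 2 * fst p) + z * (2 * n)) by ring. apply modq_2n.
  - replace (snd p + z * (2 * n) - n - 2 * (M - 1 - fst p)) with ((snd p - n - 2 * (M - 1 - fst p)) + z * (2 * n)) by ring. apply modq_2n.
Qed.

Lemma task_ok_shift M n z b : task_ok M n b -> task_ok M n (tshift (z * (2 * n)) b).
Proof.
  unfold task_ok, tshift, c0, vval, shift, mir. cbn [tx ty ts tsig trt fst snd].
  intros [H1 [H2 [H3 [H4 [H5 H6]]]]]. split; [|split; [|split; [|split; [|split]]]]; try lia.
  unfold c0, mir in *; cbn [tx ty ts tsig trt fst snd] in *.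
  match goal with |- ?A mod 2 = 0 => match type of H6 with ?B mod 2 = 0 =>
    replace A with (B + (- z * n) * 2) by ring; rewrite Z.mod_add by lia; exact H6 end end.
Qed.

Lemma itask_shift d o : itask (tshift d o) = tshift d (itask o).
Proof. destruct o as [[] [] ? ? ?]; reflexivity. Qed.

Lemma shift_sigz M n z t p : shift (z * (2 * n)) (sigz M n t p) = sigz M n (t + 2 * z) p.
Proof.
  unfold shift, sigz. cbn [fst snd]. rewrite Z.even_add, Z.even_mul. change (Z.even 2) with true. cbn [orb].
  f_equal; [destruct (Z.even t); reflexivity | ring].
Qed.

Lemma dsh_eq n a : dsh n a = (- ts a * rho n) * (2 * n).
Proof. unfold dsh. ring. Qed.


Definition consec (x y : pt) (V : list pt) : Prop := exists A B, V = A ++ x :: y :: B.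

Lemma consec_split (A B A' B' : list pt) x y x0 y0 :
  A ++ x :: y :: B = A' ++ x0 :: y0 :: B' -> (x, y) <> (x0, y0) ->
  (exists A1 B1, A' ++ [x0] = A1 ++ x :: y :: B1) \/ (exists A1 B1, y0 :: B' = A1 ++ x :: y :: B1).
Proof.
  revert A'. induction A as [|c A IH]; intros A' E Hne; simpl in E.
  - destruct A' as [|c A']; simpl in E.
    + injection E; intros; subst. congruence.
    + injection E; intros E1 E2; subst c. left.
      destruct A' as [|d A']; simpl in E1.
      * injection E1; intros; subst. exists [], []. reflexivity.
      * injection E1; intros E3 E4; subst d. exists [], (A' ++ [x0]). reflexivity.
  - destruct A' as [|c' A']; simpl in E.
    + injection E; intros E1 E2. right. exists A, B. symmetry. exact E1.
    + injection E; intros E1 E2; subst c'. destruct (IH A' E1 Hne) as [[A1 [B1 H]]|[A1 [B1 H]]].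
      * left. exists (c :: A1), B1. simpl. rewrite H. reflexivity.
      * right. exists A1, B1. exact H.
Qed.

Lemma consec_splice u v (V A B E : list pt) x y f :
  consec u v V -> V = A ++ x :: y :: B -> (u, v) <> (x, y) ->
  consec u v (A ++ x :: E ++ map f (y :: B)) \/ consec (f u) (f v) (A ++ x :: E ++ map f (y :: B)).
Proof.
  intros [A0 [B0 E0]] EV Hne. rewrite E0 in EV.
  destruct (consec_split _ _ _ _ _ _ _ _ EV Hne) as [[A1 [B1 H]]|[A1 [B1 H]]].
  - left. exists A1, (B1 ++ E ++ map f (y :: B)).
    replace (A ++ x :: E ++ map f (y :: B)) with ((A ++ [x]) ++ E ++ map f (y :: B)) by (rewrite <- app_assoc; reflexivity).
    rewrite H. rewrite <- app_assoc. reflexivity.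
  - right. rewrite H. rewrite map_app. simpl.
    exists (A ++ x :: E ++ map f A1), (map f B1). rewrite <- !app_assoc. simpl. rewrite <- !app_assoc. reflexivity.
Qed.

Lemma removelast_map {A B} (f : A -> B) l : removelast (map f l) = map f (removelast l).
Proof.
  induction l as [|a l IH]; simpl; auto. destruct l; simpl in *; auto. rewrite IH. reflexivity.
Qed.

Lemma in_removelast {A} (l : list A) p : In p (removelast l) -> In p l.
Proof.
  induction l as [|a l IH]; simpl; auto. destruct l; simpl in *; auto. intros [H|H]; auto.
Qed.

Lemma last_app_ne {A} (l1 l2 : list A) d : l2 <> [] -> last (l1 ++ l2) d = last l2 d.
Proof.
  induction l1 as [|a l1 IH]; intros H; simpl; auto. rewrite IH by auto.
  destruct l1, l2; simpl; congruence.
Qed.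

Lemma last_map_ne {A B} (f : A -> B) l d d' : l <> [] -> last (map f l) d' = f (last l d).
Proof.
  induction l as [|a l IH]; intros H; [congruence|]. destruct l as [|b l]; simpl; auto.
  simpl in IH. apply IH. discriminate.
Qed.

Lemma chain_join l1 l2 d : chain l1 -> chain l2 ->
  (l1 <> [] -> l2 <> [] -> knight_adj (last l1 d) (hd d l2)) -> chain (l1 ++ l2).
Proof.
  induction l1 as [|a l1 IH]; intros H1 H2 H3; simpl; auto.
  destruct l1 as [|b l1].
  - destruct l2 as [|c l2]; simpl; auto. split; auto. apply H3; discriminate.
  - simpl in H1. destruct H1 as [H1a H1b]. split; auto. apply (IH H1b H2).
    intros _ Hl2. apply H3; [discriminate|auto].
Qed.

Lemma ex_Forall2 {A B} (R : A -> B -> Prop) l :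
  (forall a, In a l -> exists b, R a b) -> exists l', Forall2 R l l'.
Proof.
  induction l as [|a l IH]; intros H.
  - exists []. constructor.
  - destruct (H a (or_introl eq_refl)) as [b Hb]. destruct IH as [l' Hl'].
    + intros c Hc. apply H. right. exact Hc.
    + exists (b :: l'). constructor; auto.
Qed.

Lemma Forall2_map_eq {A B C} (R : A -> B -> Prop) (f : A -> C) (g : B -> C) l l' :
  Forall2 R l l' -> (forall a b, R a b -> f a = g b) -> map f l = map g l'.
Proof. intros H Hfg. induction H; simpl; auto. f_equal; auto. Qed.

Lemma Forall2_in_r {A B} (R : A -> B -> Prop) l l' b :
  Forall2 R l l' -> In b l' -> exists a, In a l /\ R a b.
Proof.
  intros H. induction H; simpl; [tauto|]. intros [<-|Hb].
  - exists x. auto.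
  - destruct (IHForall2 Hb) as [a0 [H1 H2]]. exists a0. auto.
Qed.

Definition zsum (l : list Z) := fold_right Z.add 0 l.

Lemma last_Dlist M n a : (1 <= rho n * n) -> last (Dlist M n a) (0,0) = Dpt M n a (Nat.pred (Z.to_nat (rho n * n))).
Proof.
  intros H. unfold Dlist. destruct (Z.to_nat (rho n * n)) as [|k] eqn:E; [lia|].
  rewrite seq_S, map_app. simpl. rewrite last_last. reflexivity.
Qed.

Lemma Dlist_shape M n a : 1 <= n -> exists D', Dlist M n a = Dpt M n a 0 :: Dpt M n a 1 :: D'.
Proof.
  intros Hn. destruct (rhon_even n Hn) as [h [Hh Hh1]]. unfold Dlist. rewrite Hh.
  replace (Z.to_nat (2 * h)) with (S (S (Z.to_nat (2 * h) - 2))) by lia. simpl.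
  eexists. reflexivity.
Qed.

Lemma task_old M n a : 7 <= M -> task_ok M n a -> old M (tx a).
Proof.
  intros HM [_ [_ [Hc _]]]. revert Hc. unfold c0, mir, old. destruct (trt a); cbn [fst]; lia.
Qed.


Record Inv (M n t0 : Z) (V : list pt) (t : Z) (P O : list task) (S : list Z) : Prop := {
  iv_ne : V <> [];
  iv_chain : chain V;
  iv_pts : forall p, In p V -> in_strip M p /\ (old M p \/ (band M p /\ In (sid M n p) S));
  iv_keys : NoDup (map (key M n) (removelast V));
  iv_last : last V (0,0) = sigz M n t (hd (0,0) V);
  iv_len : length (removelast V) = (Z.to_nat ((M - 4) * n) + length O * Z.to_nat (rho n * n))%nat;
  iv_P : forall a, In a P -> consec (tx a) (ty a) V /\ task_ok M n a /\ ~ In (tsig a) S;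
  iv_Psig : NoDup (map tsig P);
  iv_Pkey : NoDup (map (fun a => key M n (tx a)) P);
  iv_O : forall o, In o O -> consec (tx o) (ty o) V /\ task_ok (M + 4) n (itask o) /\ band M (tx o) /\
                   In (sid M n (tx o)) S /\ tsig o = (sid M n (tx o) + 1) mod qq n;
  iv_Osid : NoDup (map (fun o => sid M n (tx o)) O);
  iv_t : t = t0 + 2 * rho n * zsum (map ts O);
  iv_sum : zsum (map ts P) = zsum (map ts O);
  iv_cnt : (length P + length O = Z.to_nat (qq n))%nat
}.

Lemma band_not_old M p : 7 <= M -> band M p -> old M p -> False.
Proof. unfold band, old. lia. Qed.

Lemma step M n t0 V t a P O S : 7 <= M -> 1 <= n -> Inv M n t0 V t (a :: P) O S ->
  exists V' t' P' O', Inv M n t0 V' t' P' O' (tsig a :: S) /\ length P' = length P.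
Proof.
  intros HM Hn I.
  destruct (iv_P _ _ _ _ _ _ _ _ I a (or_introl eq_refl)) as [[A [B EV]] [Ha HaS]].
  set (x := tx a) in *. set (y := ty a) in *.
  set (D := Dlist M n a).
  set (z := - ts a * rho n).
  set (T := shift (z * (2 * n))).
  set (V' := A ++ x :: D ++ map T (y :: B)).
  pose proof (task_old M n a HM Ha) as Hxold.
  destruct (Dlist_shape M n a Hn) as [D' HD'].
  destruct (rhon_even n Hn) as [h [Hh Hh1]].
  assert (HDne : D <> []) by (unfold D; rewrite HD'; discriminate).
  assert (HDpts : forall p, In p D -> band M p /\ in_strip M p /\ sid M n p = tsig a).
  { intros p Hp. unfold D, Dlist in Hp. apply in_map_iff in Hp. destruct Hp as [i [<- _]].
    destruct (D_band M n a HM i) as [Hb1 Hb2]. split; auto. split; auto. apply sid_D; auto. }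
  assert (HTkey : forall p, key M n (T p) = key M n p) by (intros; apply key_shift; lia).
  assert (Hchain := iv_chain _ _ _ _ _ _ _ _ I). rewrite EV in Hchain. apply chain_app in Hchain.
  destruct Hchain as [HchA HchB].
  assert (HchyB : chain (y :: B)) by (destruct B; simpl in *; tauto).
  assert (HrV : removelast V = A ++ x :: removelast (y :: B)).
  { rewrite EV. replace (A ++ x :: y :: B) with ((A ++ [x]) ++ y :: B) by (rewrite <- app_assoc; reflexivity).
    rewrite removelast_app by discriminate. rewrite <- app_assoc. reflexivity. }
  assert (HrV' : removelast V' = A ++ x :: D ++ map T (removelast (y :: B))).
  { unfold V'. replace (A ++ x :: D ++ map T (y :: B)) with ((A ++ x :: D) ++ map T (y :: B)) by (rewrite <- app_assoc; reflexivity).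
    rewrite removelast_app by discriminate. rewrite removelast_map. rewrite <- app_assoc. reflexivity. }
  assert (HinV : forall p, In p A \/ p = x \/ In p (y :: B) -> In p V).
  { intros p Hp. rewrite EV. apply in_or_app. destruct Hp as [Hp|[Hp|Hp]]; auto. right. left. auto. right. right. exact Hp. }
  assert (HP' : exists P', Forall2 (fun b b' => (b' = b \/ b' = tshift (z * (2 * n)) b) /\ consec (tx b') (ty b') V') P P').
  { apply ex_Forall2. intros b Hb.
    destruct (iv_P _ _ _ _ _ _ _ _ I b (or_intror Hb)) as [Hcb _].
    assert (Hne : (tx b, ty b) <> (x, y)).
    { intros E. injection E; intros _ E1. pose proof (iv_Pkey _ _ _ _ _ _ _ _ I) as K. simpl in K.
      inversion K as [|? ? K1 K2]; subst. apply K1. apply in_map_iff. exists b. split; auto. unfold x. rewrite E1. reflexivity. }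
    destruct (consec_splice _ _ _ _ _ D _ _ T Hcb EV Hne) as [H|H].
    - exists b. split; auto.
    - exists (tshift (z * (2 * n)) b). split; auto. }
  destruct HP' as [P' HP'].
  assert (HO' : exists O2, Forall2 (fun b b' => (b' = b \/ b' = tshift (z * (2 * n)) b) /\ consec (tx b') (ty b') V') O O2).
  { apply ex_Forall2. intros b Hb.
    destruct (iv_O _ _ _ _ _ _ _ _ I b Hb) as [Hcb [_ [Hbb _]]].
    assert (Hne : (tx b, ty b) <> (x, y)).
    { intros E. injection E; intros _ E1. rewrite E1 in Hbb. exact (band_not_old M x HM Hbb Hxold). }
    destruct (consec_splice _ _ _ _ _ D _ _ T Hcb EV Hne) as [H|H].
    - exists b. split; auto.
    - exists (tshift (z * (2 * n)) b). split; auto. }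
  destruct HO' as [O2 HO2].
  set (onew := mkT (Dpt M n a 0) (Dpt M n a 1) (- ts a) ((tsig a + 1) mod qq n) (trt a)).
  exists V', (t + 2 * z), P', (onew :: O2). split.
  2:{ symmetry; exact (Forall2_length HP'). }
  assert (EPsig : map tsig P' = map tsig P).
  { symmetry. eapply Forall2_map_eq; eauto. intros b b' [[->| ->] _]; reflexivity. }
  assert (EPts : map ts P' = map ts P).
  { symmetry. eapply Forall2_map_eq; eauto. intros b b' [[->| ->] _]; reflexivity. }
  assert (EPkey : map (fun b => key M n (tx b)) P' = map (fun b => key M n (tx b)) P).
  { symmetry. eapply Forall2_map_eq; eauto. intros b b' [[->| ->] _]; auto. simpl. symmetry. apply HTkey. }
  assert (EOsid : map (fun b => sid M n (tx b)) O2 = map (fun b => sid M n (tx b)) O).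
  { symmetry. eapply Forall2_map_eq; eauto. intros b b' [[->| ->] _]; auto. simpl. symmetry. apply sid_shift. }
  assert (EOts : map ts O2 = map ts O).
  { symmetry. eapply Forall2_map_eq; eauto. intros b b' [[->| ->] _]; reflexivity. }
  constructor.
  - unfold V'. destruct A; discriminate.
  -
    unfold V'. replace (A ++ x :: D ++ map T (y :: B)) with ((A ++ [x]) ++ (D ++ map T (y :: B))) by (rewrite <- app_assoc; reflexivity).
    apply (chain_join _ _ (0,0)); auto.
    + apply (chain_join _ _ (0,0)).
      * apply D_chain; auto.
      * apply chain_map; auto. apply adj_shift.
      * intros _ _. unfold D. rewrite last_Dlist by lia. cbn [hd map]. unfold T, z. rewrite <- dsh_eq. apply D_last; auto.
    + intros _ _. rewrite last_last. unfold D. rewrite HD'. simpl. apply D_first; auto.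
  -
    intros p Hp. unfold V' in Hp. apply in_app_or in Hp. destruct Hp as [Hp|[Hp|Hp]].
    + destruct (iv_pts _ _ _ _ _ _ _ _ I p (HinV p (or_introl Hp))) as [H1 H2]. split; [exact H1|].
      destruct H2 as [H2|[H2 H3]]; [left; exact H2| right; split; [exact H2| right; exact H3]].
    + subst p. destruct (iv_pts _ _ _ _ _ _ _ _ I x (HinV x (or_intror (or_introl eq_refl)))) as [H1 H2]. split; [exact H1|].
      destruct H2 as [H2|[H2 H3]]; [left; exact H2| right; split; [exact H2| right; exact H3]].
    + apply in_app_or in Hp. destruct Hp as [Hp|Hp].
      * destruct (HDpts p Hp) as [H1 [H2 H3]]. split; auto. right. split; auto. left. auto.
      * apply in_map_iff in Hp. destruct Hp as [p0 [<- Hp0]].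
        destruct (iv_pts _ _ _ _ _ _ _ _ I p0 (HinV p0 (or_intror (or_intror Hp0)))) as [H1 H2].
        split; [unfold in_strip, T, shift in *; simpl; auto|].
        destruct H2 as [H2|[H2 H3]]; [left; unfold old, T, shift in *; simpl; auto|].
        right. split; [unfold band, T, shift in *; simpl; auto|]. unfold T. rewrite sid_shift. right. auto.
  -
    rewrite HrV'. pose proof (iv_keys _ _ _ _ _ _ _ _ I) as K. rewrite HrV in K.
    replace (A ++ x :: D ++ map T (removelast (y :: B))) with ((A ++ [x]) ++ D ++ map T (removelast (y :: B))) by (rewrite <- app_assoc; reflexivity).
    replace (A ++ x :: removelast (y :: B)) with ((A ++ [x]) ++ removelast (y :: B)) in K by (rewrite <- app_assoc; reflexivity).
    rewrite !map_app. rewrite map_map. rewrite (map_ext (fun p => key M n (T p)) (key M n)) by auto.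
    rewrite !map_app in K.
    eapply Permutation_NoDup; [apply Permutation_app_swap_app|].
    apply NoDup_app; [apply D_nodup; auto|exact K|].
    intros k Hk1 Hk2. apply in_map_iff in Hk1. destruct Hk1 as [dp [<- Hdp]].
    assert (Hk2' : In (key M n dp) (map (key M n) (removelast V))) by (rewrite HrV; replace (A ++ x :: removelast (y :: B)) with ((A ++ [x]) ++ removelast (y :: B)) by (rewrite <- app_assoc; reflexivity); rewrite !map_app; exact Hk2).
    apply in_map_iff in Hk2'. destruct Hk2' as [p [Ep Hp]]. apply in_removelast in Hp.
    destruct (iv_pts _ _ _ _ _ _ _ _ I p Hp) as [_ [Hpo|[Hpb HpS]]].
    + destruct (HDpts dp Hdp) as [Hb _]. exact (key_old_band M n p dp Hpo Hb Ep).
    + destruct (HDpts dp Hdp) as [Hb [_ Hs]].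
      pose proof (key_band_sid M n p dp HM Hn Hpb Ep) as E2. rewrite Hs in E2. apply HaS. rewrite E2. exact HpS.
  -
    unfold V'. replace (A ++ x :: D ++ map T (y :: B)) with ((A ++ x :: D) ++ map T (y :: B)) by (rewrite <- app_assoc; reflexivity).
    rewrite last_app_ne by discriminate. rewrite (last_map_ne T _ (0,0)) by discriminate.
    pose proof (iv_last _ _ _ _ _ _ _ _ I) as HL. rewrite EV in HL.
    replace (A ++ x :: y :: B) with ((A ++ [x]) ++ y :: B) in HL by (rewrite <- app_assoc; reflexivity).
    rewrite last_app_ne in HL by discriminate. rewrite HL. unfold T. rewrite shift_sigz. f_equal.
    destruct A; reflexivity.
  -
    rewrite HrV'. rewrite length_app. simpl. rewrite length_app, length_map.
    pose proof (iv_len _ _ _ _ _ _ _ _ I) as HL. rewrite HrV, length_app in HL. simpl in HL.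
    unfold D. rewrite D_len. simpl length. rewrite (Forall2_length HO2) in *. lia.
  -
    intros b' Hb'. destruct (Forall2_in_r _ _ _ _ HP' Hb') as [b [Hb [Eb Hcb]]].
    destruct (iv_P _ _ _ _ _ _ _ _ I b (or_intror Hb)) as [_ [Hbok HbS]].
    split; auto.
    assert (Hsig : tsig b' = tsig b) by (destruct Eb as [-> | ->]; reflexivity).
    split; [destruct Eb as [-> | ->]; auto; apply task_ok_shift; auto|].
    rewrite Hsig. intros [E|E]; [|exact (HbS E)].
    pose proof (iv_Psig _ _ _ _ _ _ _ _ I) as K. simpl in K. inversion K as [|? ? K1 K2]; subst.
    apply K1. rewrite E. apply in_map. exact Hb.
  - rewrite EPsig. pose proof (iv_Psig _ _ _ _ _ _ _ _ I) as K. simpl in K. inversion K; auto.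
  - rewrite EPkey. pose proof (iv_Pkey _ _ _ _ _ _ _ _ I) as K. simpl in K. inversion K; auto.
  -
    intros o Ho. destruct Ho as [<-|Ho].
    + split; [|split; [|split; [|split]]].
      * exists (A ++ [x]), (D' ++ map T (y :: B)). unfold V', D. rewrite HD'. cbn [tx ty onew]. rewrite <- app_assoc. reflexivity.
      * apply newtask_ok; auto.
      * simpl. apply D_band; auto.
      * simpl. rewrite sid_D by auto. left. reflexivity.
      * simpl. rewrite sid_D by auto. reflexivity.
    + destruct (Forall2_in_r _ _ _ _ HO2 Ho) as [b [Hb [Eb Hcb]]].
      destruct (iv_O _ _ _ _ _ _ _ _ I b Hb) as [_ [Hbok [Hbb [HbS Hbsig]]]].
      split; auto.
      destruct Eb as [-> | ->].
      * split; [exact Hbok|]. split; [exact Hbb|]. split; [right; exact HbS|exact Hbsig].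
      * rewrite itask_shift. split; [apply task_ok_shift; auto|].
        simpl. split; [unfold band, shift in *; simpl; auto|]. rewrite sid_shift. split; [right; exact HbS|exact Hbsig].
  - simpl. rewrite EOsid. constructor; [|exact (iv_Osid _ _ _ _ _ _ _ _ I)].
    rewrite sid_D by auto. intros Hin. apply in_map_iff in Hin. destruct Hin as [b [Eb Hb]].
    destruct (iv_O _ _ _ _ _ _ _ _ I b Hb) as [_ [_ [_ [HbS _]]]]. apply HaS. rewrite <- Eb. exact HbS.
  - pose proof (iv_t _ _ _ _ _ _ _ _ I) as Ht. unfold onew, z. cbn [map ts]. unfold zsum in *. cbn [fold_right]. rewrite EOts. rewrite Ht. ring.
  - pose proof (iv_sum _ _ _ _ _ _ _ _ I) as Hs. unfold onew. cbn [map ts]. unfold zsum in *. cbn [fold_right map] in *. rewrite EOts, EPts. lia.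
  - cbn [length]. rewrite <- (Forall2_length HP'), <- (Forall2_length HO2). pose proof (iv_cnt _ _ _ _ _ _ _ _ I) as Hc. simpl in Hc. lia.
Qed.


Definition Ext (M n : Z) (V : list pt) : Prop :=
  exists P, (forall a, In a P -> consec (tx a) (ty a) V /\ task_ok M n a) /\
    NoDup (map tsig P) /\ NoDup (map (fun a => key M n (tx a)) P) /\
    zsum (map ts P) = 0 /\ length P = Z.to_nat (qq n).

Lemma run M n t0 : 7 <= M -> 1 <= n -> forall k P V t O S, length P = k ->
  Inv M n t0 V t P O S -> exists V' t' O' S', Inv M n t0 V' t' [] O' S'.
Proof.
  intros HM Hn k. induction k as [|k IH]; intros P V t O S Hl I.
  - destruct P; [|discriminate]. exists V, t, O, S. exact I.
  - destruct P as [|a P]; [discriminate|].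
    destruct (step M n t0 V t a P O S HM Hn I) as [V' [t' [P' [O' [I' HP']]]]].
    apply (IH P' V' t' O' (tsig a :: S)); auto. simpl in Hl. lia.
Qed.

Lemma key_iota K n p : key (K + 4) n (iota p) = iota (key K n p).
Proof.
  destruct p as [a b]. unfold key, iota. cbn [fst snd]. destruct (Z.even (b / n)); f_equal; lia.
Qed.

Lemma sigz_iota K n t p : sigz (K + 4) n t (iota p) = iota (sigz K n t p).
Proof.
  destruct p as [a b]. unfold sigz, iota. cbn [fst snd]. destruct (Z.even t); f_equal; lia.
Qed.

Lemma iota_inj p q : iota p = iota q -> p = q.
Proof. destruct p, q; unfold iota; simpl. intros H. injection H; intros. f_equal; lia. Qed.

Lemma consec_map f x y V : consec x y V -> consec (f x) (f y) (map f V).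
Proof. intros [A [B ->]]. exists (map f A), (map f B). rewrite map_app. reflexivity. Qed.

Lemma nodup_map_weaken {A B C} (f : A -> B) (g : A -> C) l :
  NoDup (map f l) -> (forall a b, In a l -> In b l -> g a = g b -> f a = f b) -> NoDup (map g l).
Proof.
  induction l as [|a l IH]; simpl; intros H1 H2; constructor.
  - inversion H1 as [|? ? K1 K2]; subst. intros Hin. apply in_map_iff in Hin. destruct Hin as [b [Eb Hb]].
    apply K1. rewrite (H2 a b); auto. apply in_map. exact Hb.
  - inversion H1; subst. apply IH; auto.
Qed.

Lemma round K n t0 L : 3 <= K -> 1 <= n -> Gtour K n t0 L -> Ext (K + 4) n (map iota L) ->
  exists L', Gtour (K + 4) n t0 L' /\ Ext (K + 8) n (map iota L').
Proof.
  intros HK Hn [Hne [Hch [Hs [Hk [Hl Hlen]]]]] [P [HP [HPs [HPk [HPsum HPlen]]]]].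
  assert (I : Inv (K + 4) n t0 (map iota L) t0 P [] []).
  { constructor.
    - destruct L; [congruence|discriminate].
    - apply chain_map; auto. apply adj_iota.
    - intros p Hp. apply in_map_iff in Hp. destruct Hp as [p0 [<- Hp0]]. pose proof (Hs p0 Hp0).
      unfold in_strip, old, iota in *. simpl. split; [lia|left; lia].
    - rewrite removelast_map, map_map. rewrite (map_ext _ (fun p => iota (key K n p))) by (intros; apply key_iota).
      rewrite <- map_map. apply nodup_map_inj; auto. intros; apply iota_inj; auto.
    - rewrite (last_map_ne iota L (0,0)) by auto. rewrite Hl. rewrite <- sigz_iota. f_equal.
      destruct L; [congruence|]. reflexivity.
    - rewrite removelast_map, length_map, Hlen. simpl. f_equal. lia.
    - intros a Ha. destruct (HP a Ha) as [H1 H2]. split; [exact H1|split; [exact H2| intros []]].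
    - exact HPs.
    - exact HPk.
    - intros o [].
    - constructor.
    - simpl. ring.
    - rewrite HPsum. reflexivity.
    - simpl. lia. }
  destruct (run (K + 4) n t0 ltac:(lia) Hn _ P _ _ _ _ eq_refl I) as [V' [t' [O' [S' I']]]].
  pose proof (iv_sum _ _ _ _ _ _ _ _ I') as Hsum. simpl in Hsum.
  pose proof (iv_t _ _ _ _ _ _ _ _ I') as Ht. rewrite <- Hsum in Ht. simpl in Ht.
  replace t' with t0 in I' by lia.
  pose proof (iv_cnt _ _ _ _ _ _ _ _ I') as Hc. simpl in Hc.
  exists V'. split.
  - split; [exact (iv_ne _ _ _ _ _ _ _ _ I')|].
    split; [exact (iv_chain _ _ _ _ _ _ _ _ I')|].
    split; [intros p Hp; exact (proj1 (iv_pts _ _ _ _ _ _ _ _ I' p Hp))|].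
    split; [exact (iv_keys _ _ _ _ _ _ _ _ I')|].
    split; [exact (iv_last _ _ _ _ _ _ _ _ I')|].
    rewrite (iv_len _ _ _ _ _ _ _ _ I'). rewrite Hc.
    destruct (qq_cases n) as [[_ [Hq [Hr _]]]|[_ [Hq [Hr _]]]]; rewrite Hq, Hr; lia.
  - exists (map itask O'). split; [|split; [|split; [|split]]].
    + intros a Ha. apply in_map_iff in Ha. destruct Ha as [o [<- Ho]].
      destruct (iv_O _ _ _ _ _ _ _ _ I' o Ho) as [Hco [Hok _]].
      split; [apply consec_map; exact Hco| replace (K + 8) with (K + 4 + 4) by lia; exact Hok].
    + rewrite map_map. apply (nodup_map_weaken (fun o => sid (K + 4) n (tx o))); [exact (iv_Osid _ _ _ _ _ _ _ _ I')|].
      intros o1 o2 H1 H2 E. simpl in E.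
      rewrite (proj2 (proj2 (proj2 (proj2 (iv_O _ _ _ _ _ _ _ _ I' o1 H1))))) in E.
      rewrite (proj2 (proj2 (proj2 (proj2 (iv_O _ _ _ _ _ _ _ _ I' o2 H2))))) in E.
      assert (B1 : 0 <= sid (K + 4) n (tx o1) < qq n) by (unfold sid; apply Z.mod_pos_bound; unfold qq; destruct (Z.even n); lia).
      assert (B2 : 0 <= sid (K + 4) n (tx o2) < qq n) by (unfold sid; apply Z.mod_pos_bound; unfold qq; destruct (Z.even n); lia).
      destruct (qq_cases n) as [[_ [Hq _]]|[_ [Hq _]]]; rewrite Hq in *; zl.
    + rewrite map_map. apply (nodup_map_weaken (fun o => sid (K + 4) n (tx o))); [exact (iv_Osid _ _ _ _ _ _ _ _ I')|].
      intros o1 o2 H1 H2 E. simpl in E. replace (K + 8) with (K + 4 + 4) in E by lia. rewrite !key_iota in E. apply iota_inj in E.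
      destruct (iv_O _ _ _ _ _ _ _ _ I' o1 H1) as [_ [_ [Hb1 _]]].
      symmetry. apply key_band_sid; auto; lia.
    + rewrite map_map, (map_ext (fun x => ts (itask x)) ts) by reflexivity. pose proof (iv_sum _ _ _ _ _ _ _ _ I') as Hs2. unfold zsum in *. simpl in Hs2. lia.
    + rewrite length_map. lia.
Qed.

Lemma rounds m n t0 L : 7 <= m -> 1 <= n -> Gtour (m - 4) n t0 L -> Ext m n (map iota L) ->
  forall j : nat, exists L', Gtour (m - 4 + 4 * Z.of_nat j) n t0 L' /\ Ext (m + 4 * Z.of_nat j) n (map iota L').
Proof.
  intros Hm Hn HG HE j. induction j as [|j IH].
  - exists L. simpl. replace (m - 4 + 0) with (m - 4) by lia. replace (m + 0) with m by lia. auto.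
  - destruct IH as [L1 [G1 E1]].
    replace (m + 4 * Z.of_nat j) with (m - 4 + 4 * Z.of_nat j + 4) in E1 by lia.
    destruct (round (m - 4 + 4 * Z.of_nat j) n t0 L1 ltac:(lia) Hn G1 E1) as [L2 [G2 E2]].
    exists L2. rewrite Nat2Z.inj_succ.
    replace (m - 4 + 4 * Z.succ (Z.of_nat j)) with (m - 4 + 4 * Z.of_nat j + 4) by lia.
    replace (m + 4 * Z.succ (Z.of_nat j)) with (m - 4 + 4 * Z.of_nat j + 8) by lia. auto.
Qed.

Lemma final m n t0 N w : 7 <= m -> 1 <= n -> tour_lift (m - 4) n N w -> w N = sigz (m - 4) n t0 (0,0) ->
  Ext m n (map iota (map w (seq 0 (S N)))) ->
  forall k, 0 <= k -> exists N' w', tour_lift (m + 4 * k) n N' w' /\ w' N' = sigz (m + 4 * k) n t0 (0,0).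
Proof.
  intros Hm Hn HT HN HE k Hk.
  pose proof (tour_to_gtour (m - 4) n N w t0 ltac:(lia) ltac:(lia) HT HN) as G.
  destruct (rounds m n t0 _ Hm Hn G HE (Z.to_nat (k + 1))) as [L [GL _]].
  replace (m - 4 + 4 * Z.of_nat (Z.to_nat (k + 1))) with (m + 4 * k) in GL by lia.
  destruct (gtour_rebase (m + 4 * k) n t0 L ltac:(lia) ltac:(lia) GL) as [L' [GL' H0]].
  destruct (gtour_to_tour (m + 4 * k) n t0 L' ltac:(lia) ltac:(lia) GL' H0) as [T1 T2].
  eexists; eexists; split; [exact T1|exact T2].
Qed.


Lemma consec_seq (f : nat -> pt) N i : (i < N)%nat -> consec (f i) (f (S i)) (map f (seq 0 (S N))).
Proof.
  intros Hi. replace (S N) with (i + S (S (N - S i)))%nat by lia. rewrite seq_app, map_app. simpl.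
  exists (map f (seq 0 i)), (map f (seq (S (S i)) (N - S i))). reflexivity.
Qed.

Definition edge_dec (x y : edge) : {x = y} + {x <> y}.
Proof. repeat decide equality; apply Z.eq_dec. Defined.

Lemma zsum_perm l l' : Permutation l l' -> zsum l = zsum l'.
Proof. unfold zsum. induction 1; simpl in *; lia. Qed.

Lemma zsum_app l l' : zsum (l ++ l') = zsum l + zsum l'.
Proof. unfold zsum. induction l; simpl; lia. Qed.

Lemma zsum_const (f : edge -> Z) c l : (forall e, In e l -> f e = c) -> zsum (map f l) = c * Z.of_nat (length l).
Proof. unfold zsum. induction l as [|a l IH]; intros H; simpl; [lia|]. rewrite H by (left; reflexivity). rewrite IH by (intros; apply H; right; auto). lia. Qed.

Lemma nodup_app_disj {A} (l1 l2 : list A) a : NoDup (l1 ++ l2) -> In a l1 -> In a l2 -> False.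
Proof.
  induction l1 as [|b l1 IH]; simpl; [tauto|]. intros H [<-|Ha] Hb; inversion H; subst.
  - apply H2. apply in_or_app. auto.
  - apply IH; auto.
Qed.

Lemma edge_cols m e : left_edge m e \/ right_edge m e -> fst (fst e) + 1 = fst (snd e).
Proof. unfold left_edge, right_edge. lia. Qed.

Section Conv.
Variables (m n : Z) (N : nat) (w : nat -> pt).
Hypotheses (Hm : 7 <= m) (Hn : 1 <= n) (HT : tour_lift (m - 4) n N w).
Let W := fun i => iota (w i).
Let V := map iota (map w (seq 0 (S N))).

Lemma mk_task e rt s sg :
  ((rt = false /\ left_edge m e) \/ (rt = true /\ right_edge m e)) ->
  ((s = 1 /\ traverses_up (fun i => iota (w i)) N e) \/ (s = -1 /\ traverses_down (fun i => iota (w i)) N e)) ->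
  0 <= sg < qq n -> (sg - (snd (fst e) + 1 - (if rt then n else 0))) mod 2 = 0 ->
  exists a i, (i < N)%nat /\ tx a = W i /\
    ((W i = fst e /\ W (S i) = snd e) \/ (W i = snd e /\ W (S i) = fst e)) /\
    consec (tx a) (ty a) V /\ task_ok m n a /\ ts a = s /\ tsig a = sg.
Proof.
  intros Hrt Hs Hsg Hpar.
  assert (Htr : exists i, (i < N)%nat /\ ((W i = fst e /\ W (S i) = snd e) \/ (W i = snd e /\ W (S i) = fst e)) /\
     snd (W (S i)) = snd (W i) + 2 * s).
  { destruct Hs as [[-> [i [Hi [Ho Hlt]]]]|[-> [i [Hi [Ho Hlt]]]]]; exists i; split; auto; split; auto;
    unfold W; destruct Hrt as [[_ [_ [_ Ha]]]|[_ [_ [_ Ha]]]];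
    destruct Ho as [[E1 E2]|[E1 E2]]; rewrite E1, E2 in *; lia. }
  destruct Htr as [i [Hi [Ho Hd]]].
  exists (mkT (W i) (W (S i)) s sg rt), i. split; auto. split; auto. split; auto.
  split; [unfold V; rewrite map_map; apply (consec_seq (fun i => iota (w i))); auto|].
  split; [|split; reflexivity].
  assert (Hs1 : s = 1 \/ s = -1) by (destruct Hs as [[-> _]|[-> _]]; auto).
  unfold task_ok, c0, vval, mir. cbn [tx ty ts tsig trt].
  destruct e as [[e1 e2] [e3 e4]]. cbn [fst snd] in *.
  destruct Ho as [[E1 E2]|[E1 E2]]; rewrite E1, E2 in *; cbn [fst snd] in *;
  destruct Hrt as [[-> [H1 [H2 H3]]]|[-> [H1 [H2 H3]]]]; cbn [fst snd] in *;
  (split; [exact Hs1|]); (split; [exact Hd|]);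
  repeat split; try lia; zl.
Qed.

Lemma key_W i j : (i < N)%nat -> (j < N)%nat -> key m n (W i) = key m n (W j) -> i = j.
Proof.
  intros Hi Hj E. unfold W in E.
  assert (K : forall p, key m n (iota p) = iota (key (m - 4) n p)).
  { intros p. rewrite <- key_iota. f_equal. lia. }
  rewrite !K in E. apply iota_inj in E. destruct HT as [_ [_ [_ [_ [Hinj _]]]]].
  apply Hinj; auto. apply same_orbit_key; auto. lia.
Qed.

Lemma distinct_edges e e' i i' :
  (left_edge m e \/ right_edge m e) -> (left_edge m e' \/ right_edge m e') ->
  (i < N)%nat -> (i' < N)%nat ->
  ((W i = fst e /\ W (S i) = snd e) \/ (W i = snd e /\ W (S i) = fst e)) ->
  ((W i' = fst e' /\ W (S i') = snd e') \/ (W i' = snd e' /\ W (S i') = fst e')) ->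
  e <> e' -> key m n (W i) <> key m n (W i').
Proof.
  intros He He' Hi Hi' Ho Ho' Hne E. apply key_W in E; auto. subst i'.
  apply edge_cols in He, He'. apply Hne.
  destruct e as [f g], e' as [f' g']. cbn [fst snd] in *.
  destruct Ho as [[E1 E2]|[E1 E2]], Ho' as [[E3 E4]|[E3 E4]].
  - congruence.
  - exfalso. rewrite E1 in E3. rewrite E2 in E4. subst. lia.
  - exfalso. rewrite E1 in E3. rewrite E2 in E4. subst. lia.
  - congruence.
Qed.

End Conv.


Lemma nodup4 {A} (x1 x2 x3 x4 : A) : x1 <> x2 -> x1 <> x3 -> x1 <> x4 -> x2 <> x3 -> x2 <> x4 -> x3 <> x4 ->
  NoDup [x1; x2; x3; x4].
Proof. intros. repeat constructor; simpl; intuition. Qed.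
Lemma nodup2 {A} (x1 x2 : A) : x1 <> x2 -> NoDup [x1; x2].
Proof. intros. repeat constructor; simpl; intuition. Qed.
Lemma nodup4_inv {A} (x1 x2 x3 x4 : A) : NoDup [x1; x2; x3; x4] ->
  x1 <> x2 /\ x1 <> x3 /\ x1 <> x4 /\ x2 <> x3 /\ x2 <> x4 /\ x3 <> x4.
Proof.
  intros H. inversion H as [|? ? H1 H2]; subst. inversion H2 as [|? ? H3 H4]; subst.
  inversion H4 as [|? ? H5 H6]; subst. simpl in *. intuition.
Qed.
Lemma nodup2_inv {A} (x1 x2 : A) : NoDup [x1; x2] -> x1 <> x2.
Proof. intros H. inversion H as [|? ? H1 H2]; subst. simpl in *. intuition. Qed.

Lemma ext_from m n N w E U D : 7 <= m -> 1 <= n -> tour_lift (m - 4) n N w -> extending m n E ->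
  Permutation E (U ++ D) -> length U = length D ->
  (forall e, In e U -> traverses_up (fun i => iota (w i)) N e) ->
  (forall e, In e D -> traverses_down (fun i => iota (w i)) N e) ->
  Ext m n (map iota (map w (seq 0 (S N)))).
Proof.
  intros Hm Hn HT [HND [HLR Hcases]] HP HUD HU HD.
  set (f := fun e => if in_dec edge_dec e U then 1 else -1).
  assert (Hsum : forall l, Permutation E l -> zsum (map f l) = 0).
  { intros l Hl. rewrite <- (zsum_perm _ _ (Permutation_map f Hl)).
    rewrite (zsum_perm _ _ (Permutation_map f HP)). rewrite map_app, zsum_app.
    pose proof (Permutation_NoDup HP HND) as HND2.
    rewrite (zsum_const f 1 U), (zsum_const f (-1) D).
    - rewrite HUD. lia.
    - intros e He. unfold f. destruct (in_dec edge_dec e U); auto. exfalso. eapply nodup_app_disj; eauto.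
    - intros e He. unfold f. destruct (in_dec edge_dec e U); auto. contradiction. }
  assert (Hget : forall e rt sg, In e E ->
    ((rt = false /\ left_edge m e) \/ (rt = true /\ right_edge m e)) ->
    0 <= sg < qq n -> (sg - (snd (fst e) + 1 - (if rt then n else 0))) mod 2 = 0 ->
    exists a i, (i < N)%nat /\ tx a = (fun i => iota (w i)) i /\
      (((fun i => iota (w i)) i = fst e /\ (fun i => iota (w i)) (S i) = snd e) \/
       ((fun i => iota (w i)) i = snd e /\ (fun i => iota (w i)) (S i) = fst e)) /\
      consec (tx a) (ty a) (map iota (map w (seq 0 (S N)))) /\ task_ok m n a /\ ts a = f e /\ tsig a = sg).
  { intros e rt sg He Hrt Hsg Hpar. unfold f. destruct (in_dec edge_dec e U) as [Hu|Hu].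
    - apply (mk_task m n N w e rt 1 sg); auto.
    - assert (Hd : In e D).
      { apply (Permutation_in _ HP) in He. apply in_app_or in He. destruct He; auto; contradiction. }
      apply (mk_task m n N w e rt (-1) sg); auto. }
  assert (Hrt : forall e, In e E -> exists rt, (rt = false /\ left_edge m e) \/ (rt = true /\ right_edge m e)).
  { intros e He. destruct (HLR e He); [exists false|exists true]; auto. }
  destruct Hcases as [[HnE [e1 [e2 [e3 [e4 [HPe [H1 [H2 [H3 H4]]]]]]]]]|[HnO [e1 [e2 [HPe [H1 H2]]]]]].
  -
    destruct HnE as [hn Hhn].
    assert (Hq : qq n = 4) by (unfold qq; replace (Z.even n) with true; auto; symmetry; apply Z.even_spec; exists hn; auto).
    assert (Hin : forall e, In e [e1; e2; e3; e4] -> In e E) by (intros; apply (Permutation_in _ (Permutation_sym HPe)); auto).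
    pose proof (nodup4_inv _ _ _ _ (Permutation_NoDup HPe HND)) as [N12 [N13 [N14 [N23 [N24 N34]]]]].
    destruct H1 as [k1 Hk1], H2 as [k2 Hk2], H3 as [k3 Hk3], H4 as [k4 Hk4].
    destruct (Hrt e1 (Hin e1 ltac:(simpl; tauto))) as [r1 R1].
    destruct (Hrt e2 (Hin e2 ltac:(simpl; tauto))) as [r2 R2].
    destruct (Hrt e3 (Hin e3 ltac:(simpl; tauto))) as [r3 R3].
    destruct (Hrt e4 (Hin e4 ltac:(simpl; tauto))) as [r4 R4].
    destruct (Hget e1 r1 1 (Hin e1 ltac:(simpl; tauto)) R1 ltac:(lia) ltac:(destruct r1; zl)) as [a1 [i1 [Hi1 [Tx1 [O1 [C1 [K1 [S1 G1]]]]]]]].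
    destruct (Hget e2 r2 3 (Hin e2 ltac:(simpl; tauto)) R2 ltac:(lia) ltac:(destruct r2; zl)) as [a2 [i2 [Hi2 [Tx2 [O2 [C2 [K2 [S2 G2]]]]]]]].
    destruct (Hget e3 r3 0 (Hin e3 ltac:(simpl; tauto)) R3 ltac:(lia) ltac:(destruct r3; zl)) as [a3 [i3 [Hi3 [Tx3 [O3 [C3 [K3 [S3 G3]]]]]]]].
    destruct (Hget e4 r4 2 (Hin e4 ltac:(simpl; tauto)) R4 ltac:(lia) ltac:(destruct r4; zl)) as [a4 [i4 [Hi4 [Tx4 [O4 [C4 [K4 [S4 G4]]]]]]]].
    assert (LR : forall e, In e [e1; e2; e3; e4] -> left_edge m e \/ right_edge m e) by (intros; apply HLR; auto).
    exists [a1; a2; a3; a4]. split; [|split; [|split; [|split]]].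
    + intros a Ha. simpl in Ha. destruct Ha as [<-|[<-|[<-|[<-|[]]]]]; auto.
    + simpl. rewrite G1, G2, G3, G4. apply nodup4; lia.
    + simpl. rewrite Tx1, Tx2, Tx3, Tx4.
      apply nodup4; eapply (distinct_edges m n N w Hn HT); eauto; apply LR; simpl; tauto.
    + simpl. rewrite S1, S2, S3, S4. pose proof (Hsum _ HPe) as Hs. simpl in Hs. exact Hs.
    + rewrite Hq. reflexivity.
  -
    destruct HnO as [hn Hhn].
    assert (Hq : qq n = 2).
    { unfold qq. replace (Z.even n) with false; auto. subst n. rewrite Z.even_add, Z.even_mul. reflexivity. }
    assert (Hin : forall e, In e [e1; e2] -> In e E) by (intros; apply (Permutation_in _ (Permutation_sym HPe)); auto).
    pose proof (nodup2_inv _ _ (Permutation_NoDup HPe HND)) as N12.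
    assert (R1 : exists r1, ((r1 = false /\ left_edge m e1) \/ (r1 = true /\ right_edge m e1)) /\
        (1 - (snd (fst e1) + 1 - (if r1 then n else 0))) mod 2 = 0).
    { destruct H1 as [[HL [k Hk]]|[HR [k Hk]]]; [exists false|exists true]; split; auto; rewrite Hk; zl. }
    assert (R2 : exists r2, ((r2 = false /\ left_edge m e2) \/ (r2 = true /\ right_edge m e2)) /\
        (0 - (snd (fst e2) + 1 - (if r2 then n else 0))) mod 2 = 0).
    { destruct H2 as [[HL [k Hk]]|[HR [k Hk]]]; [exists false|exists true]; split; auto; rewrite Hk; zl. }
    destruct R1 as [r1 [R1 P1]], R2 as [r2 [R2 P2]].
    destruct (Hget e1 r1 1 (Hin e1 ltac:(simpl; tauto)) R1 ltac:(lia) P1) as [a1 [i1 [Hi1 [Tx1 [O1 [C1 [K1 [S1 G1]]]]]]]].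
    destruct (Hget e2 r2 0 (Hin e2 ltac:(simpl; tauto)) R2 ltac:(lia) P2) as [a2 [i2 [Hi2 [Tx2 [O2 [C2 [K2 [S2 G2]]]]]]]].
    exists [a1; a2]. split; [|split; [|split; [|split]]].
    + intros a Ha. simpl in Ha. destruct Ha as [<-|[<-|[]]]; auto.
    + simpl. rewrite G1, G2. apply nodup2; lia.
    + simpl. rewrite Tx1, Tx2. apply nodup2. eapply (distinct_edges m n N w Hn HT); eauto; apply HLR; apply Hin; simpl; tauto.
    + simpl. rewrite S1, S2. pose proof (Hsum _ HPe) as Hs. simpl in Hs. exact Hs.
    + rewrite Hq. reflexivity.
Qed.


Theorem corollary3p12 (m n : Z) (N : nat) (w : nat -> pt) :
  7 <= m -> 1 <= n -> extendable m n N w ->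
  (nullhomotopic N w ->
     forall k : Z, 0 <= k ->
       exists (N' : nat) (w' : nat -> pt),
         tour_lift (m + 4 * k) n N' w' /\ nullhomotopic N' w') /\
  (generating (m - 4) n N w ->
     forall k : Z, 0 <= k ->
       exists (N' : nat) (w' : nat -> pt),
         tour_lift (m + 4 * k) n N' w' /\ generating (m + 4 * k) n N' w').
Proof.
  intros Hm Hn [HT [E [HE [U [D [HP [HUD [HU HD]]]]]]]].
  pose proof (ext_from m n N w E U D Hm Hn HT HE HP HUD HU HD) as HX.
  split.
  - intros HN k Hk.
    destruct (final m n 0 N w Hm Hn HT ltac:(rewrite sigz0; exact HN) HX k Hk) as [N' [w' [T1 T2]]].
    exists N', w'. split; [exact T1|]. unfold nullhomotopic. rewrite T2. apply sigz0.
  - intros HG k Hk. destruct HG as [HG|HG].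
    + assert (E1 : w N = sigz (m - 4) n 1 (0,0)) by (rewrite HG; unfold sigz; cbn [fst snd Z.even]; f_equal; lia).
      destruct (final m n 1 N w Hm Hn HT E1 HX k Hk) as [N' [w' [T1 T2]]].
      exists N', w'. split; [exact T1|]. left. rewrite T2. unfold sigz; cbn [fst snd Z.even]; f_equal; lia.
    + assert (E1 : w N = sigz (m - 4) n (-1) (0,0)) by (rewrite HG; unfold sigz; cbn [fst snd Z.even]; f_equal; lia).
      destruct (final m n (-1) N w Hm Hn HT E1 HX k Hk) as [N' [w' [T1 T2]]].
      exists N', w'. split; [exact T1|]. right. rewrite T2. unfold sigz; cbn [fst snd Z.even]; f_equal; lia.
Qed.
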